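(* During or after the execution of $\mathit{find\_ap\_set}$, let $xy$ be an edge of $H$ both of whose endpoints are even. If both $x$ and $y$ have been completely scanned, then $x$ and $y$ belong to the same blossom.
   Context: Let $H$ be a finite undirected graph with a matching $M_H$ (free vertices, $\mathit{mate}$, alternating and augmenting paths as usual). The procedure $\mathit{find\_ap\_set}$ maintains a search structure $S$ (a forest of alternating trees whose nodes are odd vertices and blossoms = sets of even vertices with a base; $b(x)$ denotes the base of the blossom containing an even vertex $x$) and a set $\mathit{CP}$ of vertex-disjoint augmenting paths, both initially empty. For each free vertex $f$ in turn: if $f$ is not on a path of $\mathit{CP}$, add $f$ to $S$ as the root of a new tree (a trivial even blossom) and call $\mathit{find\_ap}(f)$. The recursive call $\mathit{find\_ap}(x)$, for $x$ even, scans each non-matching edge $xy$ in turn: if $y\notin S$ and $y$ is free, add $xy$ to $S$, add the path formed by the canonical path of $x$ followed by $y$ to $\mathit{CP}$, and terminate every currently executing call of $\mathit{find\_ap}$ (the outer loop then continues with the next free vertex); if $y\notin S$ and $y$ is matched (grow step), add $y$ as odd child of $b(x)$ and $y'=\mathit{mate}(y)$ as even child of $y$, and call $\mathit{find\_ap}(y')$; if $y\in S$ and $b(y)$ is even and a proper descendant of $b(x)$ in $S$ (blossom step), let $u_1,\dots,u_k$ be the odd vertices on the tree path from $b(x)$ to $b(y)$ with $u_1$ closest to $b(x)$, merge all blossoms and odd vertices on this path into one blossom with base $b(x)$ (so $u_1,\dots,u_k$ become even), and call $\mathit{find\_ap}(u_1),\dots,\mathit{find\_ap}(u_k)$ in this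 order; otherwise do nothing. Vertices in $S$ remain in $S$ between trees. An even vertex $x$ is completely scanned if $\mathit{find\_ap}(x)$ has been called and was not terminated prematurely (so all non-matching edges at $x$ have been scanned). *)

(* Defs.v *)
From mathcomp Require Import all_boot.
Set Implicit Arguments. Unset Strict Implicit. Unset Printing Implicit Defensive.

Section FindApSet.
Variable T : finType.
Variable e : rel T.
Variable mate : T -> option T. (* the matching M_H: mate x = None iff x is free *)

Definition is_matching : Prop :=
  forall x y, mate x = Some y -> mate y = Some x /\ e x y.

Definition nonmatch_nbrs (x : T) : {set T} :=
  [set y | e x y & mate x != Some y].

(* Items of the recursion stack: an executing call find_ap(x) that still has
   the non-matching edges to the vertices of A to scan, or a pending call
   find_ap(u) (scheduled by a blossom step, not yet started). *)
Inductive frame := Scan of T & {set T} | Call of T.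

Record state := St {
  inS    : {set T};
  evn    : {set T};       (* even vertices of S (odd = inS :\: evn) *)
  base   : T -> T;        (* b(x): base of the blossom of an even vertex x *)
  par    : T -> T;        (* for an odd vertex y: the even vertex x such that
                             y was added as child of b(x) via the edge xy *)
  cpv    : {set T};       (* the vertices lying on paths of CP *)
  called : {set T};
  done   : {set T};       (* completely scanned vertices *)
  todo   : {set T};       (* free vertices not yet treated by the outer loop *)
  stack  : seq frame      (* currently executing calls, top first *)
}.

Definition init_state : state :=
  St set0 set0 id id set0 set0 set0 [set f | mate f == None] [::].

Definition upd (f : T -> T) (A : {set T}) (v : T) : T -> T :=
  fun z => if z \in A then v else f z.

(* [bs] = [:: B_0; ...; B_k] are the bases of the blossoms on the tree path
   from b(x) = B_0 down to b(y) = B_k, and [us] = [:: u_1; ...; u_k] the odd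
   vertices on it (u_1 closest to b(x)); u_i is the parent of blossom B_i
   (u_i = mate B_i) and the child of blossom B_{i-1}.  Its existence with
   k >= 1 means b(y) is a proper descendant of b(x). *)
Definition tree_chain (st : state) (x y : T) (bs us : seq T) : Prop :=
  [/\ 0 < size us, size bs = (size us).+1,
      head y bs = base st x, last x bs = base st y &
      forall i, i < size us ->
        [/\ mate (nth y bs i.+1) = Some (nth y us i),
            nth y us i \in inS st :\: evn st,
            base st (par st (nth y us i)) = nth y bs i,
            nth y bs i.+1 \in evn st &
            base st (nth y bs i.+1) = nth y bs i.+1]].

Inductive step : state -> state -> Prop :=
(* outer loop: next free vertex f, not on a path of CP: new tree rooted at f,
   call find_ap(f) *)
| step_root st f :
    stack st = [::] -> f \in todo st -> f \notin cpv st ->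
    step st (St (f |: inS st) (f |: evn st) (upd (base st) [set f] f) (par st)
                (cpv st) (f |: called st) (done st) (todo st :\ f)
                [:: Scan f (nonmatch_nbrs f)])
| step_skip_root st f :
    stack st = [::] -> f \in todo st -> f \in cpv st ->
    step st (St (inS st) (evn st) (base st) (par st) (cpv st) (called st)
                (done st) (todo st :\ f) [::])
| step_call st u s :
    stack st = Call u :: s ->
    step st (St (inS st) (evn st) (base st) (par st) (cpv st) (u |: called st)
                (done st) (todo st) (Scan u (nonmatch_nbrs u) :: s))
| step_return st x A s :
    stack st = Scan x A :: s -> A = set0 ->
    step st (St (inS st) (evn st) (base st) (par st) (cpv st) (called st)
                (x |: done st) (todo st) s)
(* scanning xy, y not in S and free: augmenting path found; P is the vertex
   set of (canonical path of x) followed by y; all calls are terminated *)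
| step_augment st x A s y (P : {set T}) :
    stack st = Scan x A :: s -> y \in A -> y \notin inS st -> mate y = None ->
    x \in P -> y \in P -> P \subset y |: inS st ->
    step st (St (y |: inS st) (evn st) (base st) (upd (par st) [set y] x)
                (cpv st :|: P) (called st) (done st) (todo st) [::])
| step_grow st x A s y y' :
    stack st = Scan x A :: s -> y \in A -> y \notin inS st -> mate y = Some y' ->
    step st (St (y' |: (y |: inS st)) (y' |: evn st)
                (upd (base st) [set y'] y') (upd (par st) [set y] x)
                (cpv st) (y' |: called st) (done st) (todo st)
                (Scan y' (nonmatch_nbrs y') :: Scan x (A :\ y) :: s))
| step_blossom st x A s y bs us :
    stack st = Scan x A :: s -> y \in A -> y \in inS st -> y \in evn st ->
    tree_chain st x y bs us ->
    let merged := [set z | ((z \in evn st) && (base st z \in bs)) || (z \in us)] in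
    step st (St (inS st) (evn st :|: [set u in us])
                (upd (base st) merged (base st x)) (par st)
                (cpv st) (called st) (done st) (todo st)
                (map Call us ++ Scan x (A :\ y) :: s))
| step_nothing st x A s y :
    stack st = Scan x A :: s -> y \in A -> y \in inS st ->
    ~ (y \in evn st /\ exists bs us, tree_chain st x y bs us) ->
    step st (St (inS st) (evn st) (base st) (par st) (cpv st) (called st)
                (done st) (todo st) (Scan x (A :\ y) :: s)).

Inductive reachable : state -> Prop :=
| reach_init : reachable init_state
| reach_step st st' : reachable st -> step st st' -> reachable st'.

End FindApSet.

(* Main.v *)
Require Import Defs.
From mathcomp Require Import all_boot.
From Stdlib Require List.
From mathcomp Require Import zify.
From Stdlib Require Import Lia.
Set Implicit Arguments. Unset Strict Implicit. Unset Printing Implicit Defensive.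

Section Proof.
Variables (T : finType) (e : rel T) (mate : T -> option T).
Hypotheses (e_sym : symmetric e) (e_irr : irreflexive e) (hM : is_matching e mate).

Definition up (st : state T) (C : T) : T :=
  match mate C with Some u => base st (par st u) | None => C end.
Definition anc (st : state T) (A C : T) := exists k, iter k (up st) C = A.
Definition evb (st : state T) (C : T) := (C \in evn st) && (base st C == C).
Definition fv (f : frame T) := match f with Scan v _ => v | Call v => v end.
Definition fvs (st : state T) := map fv (stack st).
Fixpoint sortedv (st : state T) (l : seq T) : Prop :=
  match l with [::] => True
  | f :: s => (forall g, g \in s -> anc st (base st g) (base st f)) /\ sortedv st s end.
Definition scanned (st : state T) (v w : T) :=
  w \in nonmatch_nbrs e mate v /\
  (v \in done st \/ exists A, List.In (Scan v A) (stack st) /\ w \notin A).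

Record Inv (st : state T) : Prop := {
 iW1 : forall z, z \in evn st -> z \in inS st;
 iW2 : forall z, z \in evn st -> evb st (base st z);
 iW3 : forall B, evb st B -> mate B = None \/
          exists2 u, mate B = Some u & (u \in inS st) && (u \notin evn st);
 iW4 : forall u, u \in inS st -> u \notin evn st -> par st u \in evn st;
 iW5 : forall z z', z \in inS st -> mate z = Some z' -> z' \in inS st;
 iW6a : forall z, z \in done st -> z \in evn st;
 iW6b : forall z, z \in fvs st -> z \in evn st;
 iW7a : forall f, f \in todo st -> mate f = None;
 iW7b : forall f, f \in todo st -> f \in inS st -> f \in cpv st;
 iAC : forall C, evb st C -> exists k, mate (iter k (up st) C) = None;
 iIM : forall z z', z \in evn st -> mate z = Some z' -> z' \in evn st ->
          base st z = base st z';
 iIS : forall v w, scanned st v w -> w \in inS st;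
 iSC : sortedv st (fvs st);
 iIE : forall v w, scanned st v w -> w \in evn st -> base st w != base st v ->
        w \notin done st /\ (w \notin fvs st \/
          (anc st (base st w) (base st v) /\
           forall A, List.In (Scan w A) (stack st) -> v \in A));
 iIO : forall v w, scanned st v w -> w \in inS st -> w \notin evn st ->
        forall g, g \in fvs st -> anc st (base st g) (base st (par st w)) ->
        anc st (base st g) (base st v) }.

Lemma anc_refl st A : anc st A A.
Proof. by exists 0. Qed.

Lemma anc_trans st A B C : anc st A B -> anc st B C -> anc st A C.
Proof. by move=> [k1 <-] [k2 <-]; exists (k1 + k2); rewrite iterD. Qed.

Lemma anc_up st A C : anc st A (up st C) -> anc st A C.
Proof. by move=> [k <-]; exists k.+1; rewrite iterSr. Qed.

Lemma mate_sym x y : mate x = Some y -> mate y = Some x.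
Proof. by move/hM=> []. Qed.

Lemma mate_inj x y z : mate x = Some z -> mate y = Some z -> x = y.
Proof. move=> /mate_sym h1 /mate_sym h2; congruence. Qed.

Lemma inmap (f : frame T) l : List.In f l -> fv f \in map fv l.
Proof.
elim: l => //= g l IH [->|/IH H]; rewrite inE ?eqxx //.
by rewrite H orbT.
Qed.

Lemma nonmatch_sym v w : w \in nonmatch_nbrs e mate v -> v \in nonmatch_nbrs e mate w.
Proof.
rewrite !inE => /andP [evw hm]; rewrite e_sym evw /=.
apply/eqP => /mate_sym hw; by rewrite hw eqxx in hm.
Qed.

Section WithInv.
Variable st : state T.
Hypothesis I : Inv st.

Lemma up_evb C : evb st C -> evb st (up st C).
Proof.
move=> hC; rewrite /up; case: (iW3 I hC) => [->|[u -> /andP [uS uE]]] //.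
exact: (iW2 I (iW4 I uS uE)).
Qed.

Lemma iter_evb k C : evb st C -> evb st (iter k (up st) C).
Proof. by move=> hC; elim: k => //= k IH; apply: up_evb. Qed.

Lemma evb_base z : z \in evn st -> evb st (base st z).
Proof. move=> hz; exact: (iW2 I hz). Qed.

Lemma scanned_even v w : scanned st v w -> v \in evn st.
Proof.
move=> [_ [/(iW6a I) //|[A [hA _]]]]; apply: (iW6b I).
by rewrite /fvs; apply: (inmap hA).
Qed.

Lemma sorted_head x l g : sortedv st (x :: l) -> g \in x :: l ->
  anc st (base st g) (base st x).
Proof.
move=> [H _]; rewrite inE => /orP [/eqP ->|/H //]; exact: anc_refl.
Qed.

Lemma mk_chain x y : x \in evn st -> y \in evn st ->
  anc st (base st x) (base st y) -> base st x != base st y ->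
  exists bs us, tree_chain mate st x y bs us.
Proof.
move=> xE yE hanc hne.
set C := base st y.
have hC : evb st C := evb_base yE.
have exP : exists k, iter k (up st) C == base st x.
  by case: hanc => k hk; exists k; rewrite hk.
case: (ex_minnP exP) => k /eqP hk hmin.
have k0 : 0 < k.
  case: k hk hmin => [|k'] hk _ //; move: hne; by rewrite -hk /= eqxx.
have nonroot : forall j, j < k -> exists u, mate (iter j (up st) C) = Some u.
  move=> j jk; case hm: (mate (iter j (up st) C)) => [u|]; first by exists u.
  have fix1 : forall m, iter (m + j) (up st) C = iter j (up st) C.
    elim=> // m IH; by rewrite addSn iterS IH /up hm.
  have hk' := hk; rewrite -(subnK (ltnW jk)) fix1 in hk'.
  have := hmin j; rewrite /= hk' eqxx => /(_ isT).
  by rewrite leqNgt jk.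
pose bs := [seq iter (k - i) (up st) C | i <- iota 0 k.+1].
pose us := [seq odflt y (mate (iter (k - i.+1) (up st) C)) | i <- iota 0 k].
exists bs, us.
have szus : size us = k by rewrite size_map size_iota.
have szbs : size bs = k.+1 by rewrite size_map size_iota.
have nbs : forall d i, i < k.+1 -> nth d bs i = iter (k - i) (up st) C.
  by move=> d i ik; rewrite (nth_map 0) ?size_iota // nth_iota.
have nus : forall i, i < k -> nth y us i = odflt y (mate (iter (k - i.+1) (up st) C)).
  by move=> i ik; rewrite (nth_map 0) ?size_iota // nth_iota.
split.
- by rewrite szus.
- by rewrite szus szbs.
- by rewrite -nth0 nbs // subn0.
- by rewrite -nth_last szbs /= nbs // subnn.
move=> i; rewrite szus => ik.
rewrite nus // !nbs //; last by apply: ltnW.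
have hj : k - i.+1 < k by lia.
have [u hu] := nonroot (k - i.+1) hj; rewrite hu /=.
have hD := iter_evb (k - i.+1) hC.
case/andP: (hD) => DE /eqP Dbase.
have [hr|[u' hu' /andP [uS uE]]] := iW3 I hD; first by rewrite hr in hu.
rewrite hu' in hu; case: hu => <-.
split=> //.
- by rewrite inE uS uE.
- have -> : k - i = (k - i.+1).+1 by rewrite subnSK.
  by rewrite iterS /up hu'.
Qed.

Lemma final x y : e x y -> x \in evn st -> y \in evn st ->
  x \in done st -> y \in done st -> base st x = base st y.
Proof.
move=> exy xE yE xD yD.
case hm: (mate x == Some y); first by apply: (iIM I xE (eqP hm) yE).
have hsc : scanned st x y by split; [rewrite inE exy hm | left].
case: (eqVneq (base st y) (base st x)) => [//|hne].
by have [] := iIE I hsc yE hne; rewrite yD.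
Qed.

End WithInv.

Lemma inv_init : Inv (init_state mate).
Proof.
have nsc : forall v w, ~ scanned (init_state mate) v w.
  by move=> v w [_ [|[A []]]]; rewrite ?inE.
split; rewrite /evb /fvs /=.
all: try (by move=> z; rewrite inE).
all: try (by move=> z z'; rewrite inE).
all: try (by move=> v w /nsc).
all: try done.
by move=> f; rewrite inE => /eqP.
Qed.

Lemma inv_skip st f : Inv st -> stack st = [::] -> f \in todo st -> f \in cpv st ->
  Inv (St (inS st) (evn st) (base st) (par st) (cpv st) (called st)
          (done st) (todo st :\ f) [::]).
Proof.
move=> I hs hf hc.
have hsc : forall v w, scanned (St (inS st) (evn st) (base st) (par st) (cpv st) (called st)
          (done st) (todo st :\ f) [::]) v w -> scanned st v w.
  by move=> v w [h1 [h2|[A []]]]; split => //; left.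
case: I => W1 W2 W3 W4 W5 W6a W6b W7a W7b AC IM IS SC IE IO.
split => //=.
- by move=> g; rewrite !inE => /andP [_ /W7a].
- by move=> g; rewrite !inE => /andP [_ /W7b].
- by move=> v w /hsc /IS.
- move=> v w /hsc h wE hne; have [h1 _] := IE _ _ h wE hne; split => //; by left.
Qed.


Lemma iter_eq (f g : T -> T) (P : T -> Prop) C k :
  (forall z, P z -> f z = g z) -> (forall z, P z -> P (g z)) -> P C ->
  iter k f C = iter k g C /\ P (iter k g C).
Proof.
move=> hfg hP hC; elim: k => [|k [IH1 IH2]] //=.
by rewrite IH1 hfg //; split => //; apply: hP.
Qed.

Lemma sortedv_mono st st' l :
  (forall f g, f \in l -> g \in l -> anc st (base st g) (base st f) ->
     anc st' (base st' g) (base st' f)) ->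
  sortedv st l -> sortedv st' l.
Proof.
elim: l => //= a l IH H [H1 H2]; split.
  move=> g hg; apply: H; rewrite ?inE ?eqxx ?hg ?orbT //; exact: H1.
apply: IH => // f g hf hg; apply: H; by rewrite inE ?hf ?hg orbT.
Qed.

Lemma inv_call st u s : Inv st -> stack st = Call u :: s ->
  Inv (St (inS st) (evn st) (base st) (par st) (cpv st) (u |: called st)
          (done st) (todo st) (Scan u (nonmatch_nbrs e mate u) :: s)).
Proof.
move=> I hs.
set st' := St _ _ _ _ _ _ _ _ _.
have hf : fvs st' = fvs st by rewrite /fvs /= hs.
have hsc : forall v w, scanned st' v w -> scanned st v w.
  move=> v w [h1 [h2|[A [hA hw]]]]; split => //; first by left.
  case: hA => [[hv hA]|hA].
    by subst; rewrite (negbTE hw) in h1.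
  by right; exists A; rewrite hs; split => //; right.
have I' := I.
case: I => W1 W2 W3 W4 W5 W6a W6b W7a W7b AC IM IS SC IE IO.
split => //.
- by rewrite hf; apply: W6b.
- by move=> v w /hsc /IS.
- by rewrite hf; apply: (sortedv_mono _ SC).
- move=> v w h wE hne; have [h1 h2] := IE _ _ (hsc _ _ h) wE hne; split => //.
  case: h2 => [h2|[h3 h4]]; [left; by rewrite hf | right; split => //].
  move=> A [[hw hA]|hA]; last by apply: h4; rewrite hs; right.
  subst; apply: nonmatch_sym; exact: (hsc _ _ h).1.
- move=> v w h wS wE g; rewrite hf; exact: IO _ _ (hsc _ _ h) wS wE g.
Qed.

Lemma inv_return st x A s : Inv st -> stack st = Scan x A :: s -> A = set0 ->
  Inv (St (inS st) (evn st) (base st) (par st) (cpv st) (called st)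
          (x |: done st) (todo st) s).
Proof.
move=> I hs hA.
set st' := St _ _ _ _ _ _ _ _ _.
have hf : fvs st = x :: fvs st' by rewrite /fvs /= hs.
have hsc : forall v w, scanned st' v w -> scanned st v w.
  move=> v w [h1 [h2|[B [hB hw]]]]; split => //.
    case/setU1P: h2 => [->|h2]; last by left.
    by right; exists A; rewrite hs hA inE; split => //; left.
  by right; exists B; rewrite hs; split => //; right.
have xE : x \in evn st by apply: (iW6b I); rewrite hf inE eqxx.
have I' := I.
case: I => W1 W2 W3 W4 W5 W6a W6b W7a W7b AC IM IS SC IE IO.
split => //.
- by move=> z /setU1P [->|/W6a].
- by move=> z hz; apply: W6b; rewrite hf inE hz orbT.
- by move=> v w /hsc /IS.
- by move: SC; rewrite hf => -[_]; apply: sortedv_mono.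
- move=> v w h wE hne; have [h1 h2] := IE _ _ (hsc _ _ h) wE hne.
  have wx : w != x.
    apply/eqP => wx; subst w; case: h2 => [|[_ h4]].
      by rewrite hf inE eqxx.
    by have := h4 A; rewrite hs hA inE => /(_ (or_introl erefl)).
  split; first by rewrite !inE negb_or wx.
  case: h2 => [h2|[h3 h4]]; [left | right; split => //].
    by move: h2; rewrite hf inE negb_or => /andP [].
  by move=> B hB; apply: h4; rewrite hs; right.
- move=> v w h wS wE g hg; apply: (IO _ _ (hsc _ _ h) wS wE g).
  by rewrite hf inE hg orbT.
Qed.


Lemma inv_nothing st x A s y : Inv st -> stack st = Scan x A :: s ->
  y \in A -> y \in inS st ->
  ~ (y \in evn st /\ exists bs us, tree_chain mate st x y bs us) ->
  Inv (St (inS st) (evn st) (base st) (par st) (cpv st) (called st)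
          (done st) (todo st) (Scan x (A :\ y) :: s)).
Proof.
move=> I hs yA yS hnc.
set st' := St _ _ _ _ _ _ _ _ _.
have hf : fvs st' = fvs st by rewrite /fvs /= hs.
have hfx : fvs st = x :: map fv s by rewrite /fvs hs.
have xE : x \in evn st by apply: (iW6b I); rewrite hfx inE eqxx.
have hsc : forall v w, scanned st' v w -> scanned st v w \/ (v = x /\ w = y).
  move=> v w [h1 [h2|[B [hB hw]]]]; first by left; split => //; left.
  case: hB => [[hv hB]|hB].
    subst; case: (eqVneq w y) => [->|wy]; first by right.
    left; split => //; right; exists A; rewrite hs; split; first by left.
    by move: hw; rewrite !inE wy.
  by left; split => //; right; exists B; rewrite hs; split => //; right.
have noanc : y \in evn st -> base st x != base st y -> ~ anc st (base st x) (base st y).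
  move=> yE hne ha; apply: hnc; split => //; exact: mk_chain.
have SC' : sortedv st (x :: map fv s) by rewrite -hfx; exact: iSC I.
have Cyx : scanned st y x -> base st x != base st y -> False.
  move=> h hne; have yE := scanned_even I h.
  have [_ [|[ha _]]] := iIE I h xE hne; first by rewrite hfx inE eqxx.
  exact: noanc yE hne ha.
have I' := I.
case: I => W1 W2 W3 W4 W5 W6a W6b W7a W7b AC IM IS SC IE IO.
split => //.
- by rewrite hf; apply: W6b.
- by move=> v w /hsc [/IS //|[_ ->]].
- by rewrite hf; apply: (sortedv_mono _ SC).
- move=> v w h wE hne.
  case: (eqVneq w x) => [wx|wnx].
    subst w; case: (eqVneq v y) => [vy|vny].
      subst v; case: (hsc _ _ h) => [h'|[yx _]]; first by case: (Cyx h' hne).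
      by subst; rewrite eqxx in hne.
    case: (hsc _ _ h) => [h'|[vx _]]; last by subst; rewrite eqxx in hne.
    have [h1 h2] := IE _ _ h' wE hne; split => //.
    case: h2 => [h2|[h3 h4]]; [left; by rewrite hf | right; split => //].
    move=> B [[<-]|hB]; last by apply: h4; rewrite hs; right.
    have := h4 A; rewrite hs => /(_ (or_introl erefl)) vA.
    by rewrite !inE vny.
  case: (hsc _ _ h) => [h'|[vx wy]].
    have [h1 h2] := IE _ _ h' wE hne; split => //.
    case: h2 => [h2|[h3 h4]]; [left; by rewrite hf | right; split => //].
    move=> B [[hwx _]|hB]; first by rewrite hwx eqxx in wnx.
    by apply: h4; rewrite hs; right.
  subst v w.
  have xyn : x \in nonmatch_nbrs e mate y by apply: nonmatch_sym; exact: h.1.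
  have hne' : base st x != base st y by rewrite eq_sym.
  split.
    apply/negP => yD; apply: (Cyx _ hne'); split => //; by left.
  case: (boolP (y \in fvs st)) => [yF|yF]; last by left; rewrite hf.
  right; split.
    have := sorted_head (g:=y) SC'.
    by rewrite -hfx => /(_ yF) H; exact H.
  move=> B [[hyx _]|hB]; first by rewrite hyx eqxx in wnx.
  case: (boolP (x \in B)) => // xB; exfalso; apply: (Cyx _ hne').
  by split => //; right; exists B; rewrite hs; split => //; right.
- move=> v w h wS wE g; rewrite hf => hg.
  case: (eqVneq v x) => [->|vx].
    have := sorted_head (g:=g) SC'.
    by rewrite -hfx => /(_ hg) H _; exact H.
  case: (hsc _ _ h) => [h'|[/eqP]]; last by rewrite (negbTE vx).
  exact: IO _ _ h' wS wE g hg.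
Qed.


Lemma inv_augment st x A s y (P : {set T}) : Inv st -> stack st = Scan x A :: s ->
  y \in A -> y \notin inS st -> mate y = None ->
  x \in P -> y \in P -> P \subset y |: inS st ->
  Inv (St (y |: inS st) (evn st) (base st) (upd (par st) [set y] x)
          (cpv st :|: P) (called st) (done st) (todo st) [::]).
Proof.
move=> I hs yA yS my xP yP PS.
set st' := St _ _ _ _ _ _ _ _ _.
have xE : x \in evn st by apply: (iW6b I); rewrite /fvs hs inE eqxx.
have hup : forall C, evb st C -> up st' C = up st C.
  move=> C hC; rewrite /up /=; case: (iW3 I hC) => [->|[u -> /andP [uS _]]] //.
  rewrite /upd inE; case: (eqVneq u y) => [uy|//]; by subst; rewrite uS in yS.
have hit : forall k C, evb st C -> iter k (up st) C = iter k (up st') C.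
  move=> k C hC; have [] := iter_eq k hup (up_evb I) hC; done.
have hanc : forall A C, evb st C -> anc st A C -> anc st' A C.
  by move=> A0 C hC [k hk]; exists k; rewrite -hit.
have hsc : forall v w, scanned st' v w -> scanned st v w.
  by move=> v w [h1 [h2|[B []]]]; split => //; left.
have I' := I.
case: I => W1 W2 W3 W4 W5 W6a W6b W7a W7b AC IM IS SC IE IO.
split => //=.
- by move=> z /W1 hz; rewrite inE hz orbT.
- move=> B hB; case: (W3 _ hB) => [->|[u hu /andP [uS uE]]]; first by left.
  by right; exists u => //; rewrite inE uS orbT uE.
- move=> u; rewrite /upd !inE => /orP [/eqP ->|uS] uE; first by rewrite eqxx.
  case: (eqVneq u y) => [uy|uy] //.
  exact: W4.
- move=> z z'; rewrite !inE => /orP [/eqP ->|zS]; first by rewrite my.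
  by move/(W5 _ _ zS) ->; rewrite orbT.
- move=> f hf; rewrite !inE => /orP [/eqP ->|fS]; first by rewrite yP orbT.
  by rewrite W7b.
- by move=> C hC; have [k hk] := AC _ hC; exists k; rewrite -hit.
- by move=> v w /hsc /IS hw; rewrite inE hw orbT.
- move=> v w /hsc h wE hne; have [h1 _] := IE _ _ h wE hne; split => //; by left.
Qed.

Lemma inv_root st f : Inv st -> stack st = [::] -> f \in todo st -> f \notin cpv st ->
  Inv (St (f |: inS st) (f |: evn st) (upd (base st) [set f] f) (par st)
          (cpv st) (f |: called st) (done st) (todo st :\ f)
          [:: Scan f (nonmatch_nbrs e mate f)]).
Proof.
move=> I hs ft fc.
set st' := St _ _ _ _ _ _ _ _ _.
have fS : f \notin inS st by apply/negP => /(iW7b I ft) h; rewrite h in fc.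
have mf : mate f = None by apply: (iW7a I).
have neS : forall z, z \in inS st -> z != f.
  by move=> z zS; apply/eqP => zf; subst; rewrite zS in fS.
have hb : forall z, z \in inS st -> base st' z = base st z.
  by move=> z /neS zf; rewrite /= /upd inE (negbTE zf).
have hevb : forall C, evb st C -> evb st' C.
  move=> C /andP [CE /eqP Cb]; apply/andP; split; first by rewrite /= inE CE orbT.
  by rewrite hb ?Cb // (iW1 I).
have hup : forall C, evb st C -> up st' C = up st C.
  move=> C hC; rewrite /up; case: (iW3 I hC) => [->|[u -> /andP [uS uE]]] //.
  rewrite hb //; exact: (iW1 I (iW4 I uS uE)).
have hit : forall k C, evb st C -> iter k (up st) C = iter k (up st') C /\ evb st (iter k (up st) C).
  move=> k C hC; have [h1 h2] := iter_eq k hup (up_evb I) hC; by rewrite h1.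
have hanc : forall A C, evb st C -> anc st' A C -> anc st A C /\ evb st A.
  move=> A0 C hC [k hk]; have [h1 h2] := hit k C hC; split; first by exists k; rewrite h1.
  by rewrite -hk -h1.
have hsc : forall v w, scanned st' v w -> scanned st v w.
  move=> v w [h1 [h2|[B [hB hw]]]]; first by split => //; left.
  case: hB => [[hv hB]|[]].
  by subst; rewrite (negbTE hw) in h1.
have I' := I.
case: I => W1 W2 W3 W4 W5 W6a W6b W7a W7b AC IM IS SC IE IO.
split => //=.
- move=> z; rewrite !inE => /orP [H|/W1 H]; by rewrite H ?orbT.
- move=> z; rewrite inE => /orP [zf|zE].
    rewrite in_set1 in zf; move/eqP: zf => ->.
    by rewrite /evb /= /upd !inE !eqxx.
  change (evb st' (base st' z)); rewrite hb ?W1 //; apply: hevb; exact: W2.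
- move=> B; rewrite /evb /= /upd !inE.
  case: (eqVneq B f) => [->|Bf] /=; first by left.
  move=> /andP [BE Bb]; case: (W3 B); first by rewrite /evb BE.
    by left.
  move=> [u hu /andP [uS uE]]; right; exists u => //.
  by rewrite !inE uS orbT (negbTE uE) (negbTE (neS _ uS)).
- move=> u; rewrite !inE negb_or => /orP [/eqP ->|uS]; first by rewrite eqxx.
  by move=> /andP [_ uE]; rewrite W4 ?orbT.
- move=> z z'; rewrite !inE => /orP [/eqP ->|zS]; first by rewrite mf.
  by move/(W5 _ _ zS) ->; rewrite orbT.
- by move=> z /W6a h; rewrite inE h orbT.
- by move=> z; rewrite /fvs /= !inE => /eqP ->; rewrite eqxx.
- by move=> g; rewrite inE => /andP [_ /W7a].
- move=> g; rewrite !inE => /andP [gf gt] /orP [/eqP gf'|gS]; first by rewrite gf' eqxx in gf.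
  exact: W7b.
- move=> C; rewrite /evb /= /upd !inE.
  case: (eqVneq C f) => [->|Cf] /=; first by exists 0.
  move=> /andP [CE Cb]; have hC : evb st C by rewrite /evb CE.
  have [k hk] := AC _ hC; exists k; by have [<- _] := hit k C hC.
- move=> z z'; rewrite !inE => /orP [/eqP ->|zE]; first by rewrite mf.
  move=> hm /orP [/eqP zf|z'E].
    by subst; move: (mate_sym hm); rewrite mf.
  by change (base st' z = base st' z'); rewrite !hb ?W1 //; apply: IM.
- by move=> v w /hsc /IS hw; rewrite inE hw orbT.
- move=> v w h; have h' := hsc _ _ h; have wS := IS _ _ h'.
  have vS : v \in inS st by apply: W1; exact: (scanned_even I' h').
  move=> wE0 hne0.
  have wE : w \in evn st by move: wE0; rewrite in_setU1 (negbTE (neS _ wS)).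
  have hne : base st w != base st v by rewrite -!hb //; exact hne0.
  have [h1 _] := IE _ _ h' wE hne; split => //; left.
  by rewrite /fvs /= inE (neS _ wS).
- move=> v w h wS wE g; rewrite /fvs /= inE => /eqP -> {g}.
  have h' := hsc _ _ h; have wS' := IS _ _ h'.
  have wE' : w \notin evn st by move: wE; rewrite inE negb_or => /andP [].
  have hp : evb st (base st (par st w)) by apply: W2; apply: W4.
  have H2 : base st' (par st' w) = base st (par st w) := hb _ (W1 _ (W4 _ wS' wE')).
  change (anc st' (base st' f) (base st' (par st' w)) -> anc st' (base st' f) (base st' v)).
  rewrite H2; move/(hanc _ _ hp) => [_ /andP [fE _]].
  have bf : base st' f = f by rewrite /= /upd inE eqxx.
  by move: (W1 _ fE); rewrite bf (negbTE fS).
Qed.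


Lemma inv_grow st x A s y y' : Inv st -> stack st = Scan x A :: s ->
  y \in A -> y \notin inS st -> mate y = Some y' ->
  Inv (St (y' |: (y |: inS st)) (y' |: evn st) (upd (base st) [set y'] y')
          (upd (par st) [set y] x) (cpv st) (y' |: called st) (done st) (todo st)
          (Scan y' (nonmatch_nbrs e mate y') :: Scan x (A :\ y) :: s)).
Proof.
move=> I hs yA yS my.
set st' := St _ _ _ _ _ _ _ _ _.
have hfx : fvs st = x :: map fv s by rewrite /fvs hs.
have hf : fvs st' = y' :: fvs st by rewrite hfx.
have xE : x \in evn st by apply: (iW6b I); rewrite hfx inE eqxx.
have xS := iW1 I xE.
have my' : mate y' = Some y := mate_sym my.
have y'S : y' \notin inS st.
  by apply/negP => /(iW5 I) /(_ my') h; rewrite h in yS.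
have yy' : y != y'.
  apply/eqP => yy; subst y'; have [_ h] := hM my; by rewrite e_irr in h.
have neS : forall z, z \in inS st -> (z != y) && (z != y').
  move=> z zS; apply/andP; split; apply/eqP => zy; subst.
    by rewrite zS in yS.
  by rewrite zS in y'S.
have neSy : forall z, z \in inS st -> z != y by move=> z /neS /andP [].
have neSy' : forall z, z \in inS st -> z != y' by move=> z /neS /andP [].
have hb : forall z, z \in inS st -> base st' z = base st z.
  by move=> z /neSy' zf; rewrite /= /upd inE (negbTE zf).
have hp : forall z, z \in inS st -> par st' z = par st z.
  by move=> z /neSy zf; rewrite /= /upd inE (negbTE zf).
have hby' : base st' y' = y' by rewrite /= /upd inE eqxx.
have hevb : forall C, evb st C -> evb st' C.
  move=> C /andP [CE /eqP Cb]; apply/andP; split; first by rewrite /= inE CE orbT.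
  by rewrite hb ?Cb // (iW1 I).
have hup : forall C, evb st C -> up st' C = up st C.
  move=> C hC; rewrite /up; case: (iW3 I hC) => [->|[u -> /andP [uS uE]]] //.
  rewrite hp // hb //; exact: (iW1 I (iW4 I uS uE)).
have hit : forall k C, evb st C -> iter k (up st) C = iter k (up st') C /\ evb st (iter k (up st) C).
  move=> k C hC; have [h1 h2] := iter_eq k hup (up_evb I) hC; by rewrite h1.
have hanc : forall A C, evb st C -> anc st' A C -> anc st A C /\ evb st A.
  move=> A0 C hC [k hk]; have [h1 h2] := hit k C hC; split; first by exists k; rewrite h1.
  by rewrite -hk -h1.
have hanc' : forall A C, evb st C -> anc st A C -> anc st' A C.
  by move=> A0 C hC [k hk]; exists k; have [<- _] := hit k C hC.
have upy' : up st' y' = base st x.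
  by rewrite /up my' /= /upd !inE eqxx (negbTE (neSy' _ xS)).
have hsc : forall v w, scanned st' v w -> scanned st v w \/ (v = x /\ w = y).
  move=> v w [h1 [h2|[B [hB hw]]]]; first by left; split => //; left.
  case: hB => [[hv hB]|[[hv hB]|hB]].
  - by subst; rewrite (negbTE hw) in h1.
  - subst; case: (eqVneq w y) => [->|wy]; first by right.
    left; split => //; right; exists A; rewrite hs; split; first by left.
    by move: hw; rewrite !inE wy.
  - by left; split => //; right; exists B; rewrite hs; split => //; right.
have hevb_old : forall C, evb st' C -> C != y' -> evb st C.
  move=> C /andP [CE Cb] Cy; have CE' : C \in evn st.
    by move: CE; rewrite /= in_setU1 (negbTE Cy).
  have CS := iW1 I CE'.
  by rewrite /evb CE' -(hb _ CS).
have I' := I.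
case: I => W1 W2 W3 W4 W5 W6a W6b W7a W7b AC IM IS SC IE IO.
split.
- move=> z; rewrite /= !inE => /orP [H|/W1 H]; by rewrite H ?orbT.
- move=> z zE0; change (evb st' (base st' z)).
  have : z \in y' |: evn st := zE0; rewrite in_setU1 => /orP [/eqP ->|zE].
    rewrite hby'; apply/andP; split; [by rewrite /= !inE ?eqxx | by rewrite hby'].
  by rewrite hb ?W1 //; apply: hevb; exact: W2.
- move=> B hB; case: (eqVneq B y') => [->|By].
    right; exists y => //; rewrite /= !inE eqxx orbT /=.
    by rewrite negb_or (negbTE yy') /=; apply/negP => /W1; rewrite (negbTE yS).
  case: (W3 _ (hevb_old _ hB By)) => [->|[u hu /andP [uS uE]]]; first by left.
  right; exists u => //; rewrite /= !inE uS !orbT /= negb_or (negbTE uE) andbT.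
  exact: neSy' uS.
- move=> u; rewrite /= !inE negb_or => /orP [/eqP ->|]; first by rewrite eqxx.
  case/orP => [/eqP ->|uS] /andP [uy' uE].
    by rewrite /upd ?inE ?eqxx /= ?xE ?orbT.
  by rewrite /upd ?inE (negbTE (neSy _ uS)) /= W4 ?orbT.
- move=> z z'; rewrite /= !inE => /orP [/eqP ->|/orP [/eqP ->|zS]].
  + by rewrite my' => -[<-]; rewrite eqxx orbT.
  + by rewrite my => -[<-]; rewrite eqxx.
  + by move/(W5 _ _ zS) => h; rewrite h !orbT.
- by move=> z /W6a h; rewrite /= inE h orbT.
- move=> z; rewrite hf in_cons in_setU1 => /orP [->//|zF].
  by rewrite W6b ?orbT.
- exact: W7a.
- move=> f ft; rewrite /= !inE => /orP [/eqP fy'|/orP [/eqP fy|fS]].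
  + by subst; move: (W7a _ ft); rewrite my'.
  + by subst; move: (W7a _ ft); rewrite my.
  + exact: W7b.
- move=> C hC; case: (eqVneq C y') => [->|Cy].
    have hx : evb st (base st x) by apply: W2.
    have [k hk] := AC _ hx; exists k.+1; rewrite iterSr upy'.
    by have [<- _] := hit k _ hx.
  have hC' := hevb_old _ hC Cy; have [k hk] := AC _ hC'.
  by exists k; have [<- _] := hit k _ hC'.
- move=> z z'; rewrite /= !in_setU1 => /orP [/eqP ->|zE].
    by rewrite my' => -[<-] /orP [/eqP h|/W1 h]; [move: yy'; rewrite h eqxx | rewrite h in yS].
  move=> hm /orP [/eqP zy|z'E].
    subst; have := mate_inj hm my => zy; subst.
    by move: (W1 _ zE); rewrite (negbTE yS).
  change (base st' z = base st' z'); rewrite !hb ?W1 //; exact: IM.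
- move=> v w /hsc [/IS h|[_ ->]]; by rewrite /= !inE ?h ?eqxx !orbT.
- rewrite hf hfx; split.
    move=> g hg; rewrite hby'; apply: anc_up; rewrite upy'.
    have gE : g \in evn st by apply: W6b; rewrite hfx.
    rewrite hb ?W1 //; apply: hanc'; first by apply: W2.
    by apply: (sorted_head (g:=g) (l := map fv s)); rewrite // -hfx.
  have SC' : sortedv st (x :: map fv s) by rewrite -hfx.
  apply: (sortedv_mono _ SC') => f g hf1 hg1 ha.
  have fE : f \in evn st by apply: W6b; rewrite hfx.
  have gE : g \in evn st by apply: W6b; rewrite hfx.
  rewrite !hb ?W1 //; apply: hanc' => //; exact: W2.
- move=> v w h wE0 hne0.
  case: (hsc _ _ h) => [h'|[vx wy]]; last first.
    subst; move: wE0; rewrite /= in_setU1 (negbTE yy') /= => /W1.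
    by rewrite (negbTE yS).
  have wS := IS _ _ h'; have vE := scanned_even I' h'; have vS := W1 _ vE.
  have wE : w \in evn st by move: wE0; rewrite /= in_setU1 (negbTE (neSy' _ wS)).
  have hne : base st w != base st v by rewrite -!hb //; exact hne0.
  have [h1 h2] := IE _ _ h' wE hne; split => //.
  case: h2 => [h2|[h3 h4]].
    by left; rewrite hf in_cons negb_or h2 andbT (neSy' _ wS).
  right; split.
    rewrite !hb //; apply: hanc' => //; exact: W2.
  move=> B [[hw _]|[[hw hB]|hB]].
  + by move: (neSy' _ wS); rewrite hw eqxx.
  + subst; have := h4 A; rewrite hs => /(_ (or_introl erefl)) vA.
    by rewrite !inE vA (neSy _ vS).
  + by apply: h4; rewrite hs; right.
- move=> v w h wS0 wE0 g hg0.
  case: (hsc _ _ h) => [h'|[vx wy]]; last first.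
    subst; rewrite /= /upd !inE eqxx; by [].
  have wS := IS _ _ h'; have vE := scanned_even I' h'; have vS := W1 _ vE.
  have wE : w \notin evn st by move: wE0; rewrite /= in_setU1 negb_or => /andP [].
  have pwS := W1 _ (W4 _ wS wE).
  have H2 : base st' (par st' w) = base st (par st w) by rewrite hp // hb.
  have pE : evb st (base st (par st w)) by apply: W2; apply: W4.
  rewrite H2; move: hg0; rewrite hf in_cons => /orP [/eqP ->|hg].
    rewrite hby' => /(hanc _ _ pE) [_ /andP [y'E _]].
    by move: (W1 _ y'E); rewrite (negbTE y'S).
  have gE := W6b _ hg; rewrite !hb ?W1 // => /(hanc _ _ pE) [ha _].
  apply: hanc'; first by apply: W2.
  exact: IO _ _ h' wS wE g hg ha.
Qed.


Lemma iter_fixed st R m : mate R = None -> iter m (up st) R = R.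
Proof. by move=> hR; elim: m => //= m ->; rewrite /up hR. Qed.

Lemma sorted_app st (B : T) l1 l2 :
  (forall f, f \in l1 -> base st f = B) ->
  (forall g, g \in l1 ++ l2 -> anc st (base st g) B) ->
  sortedv st l2 -> sortedv st (l1 ++ l2).
Proof.
elim: l1 => //= a l1 IH hB hA hs; split.
  move=> g hg; rewrite (hB a) ?inE ?eqxx //; apply: hA; by rewrite inE hg orbT.
apply: IH => //.
  by move=> f hf; apply: hB; rewrite inE hf orbT.
by move=> g hg; apply: hA; rewrite inE hg orbT.
Qed.

Section Blossom.
Variables (st : state T) (x : T) (A : {set T}) (s : seq (frame T)) (y : T) (bs us : seq T).
Hypotheses (I : Inv st) (hs : stack st = Scan x A :: s) (yA : y \in A)
  (yS : y \in inS st) (yE : y \in evn st) (hch : tree_chain mate st x y bs us).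

Let B0 := base st x.
Let bb C := if C \in bs then B0 else C.
Let merged := [set z | ((z \in evn st) && (base st z \in bs)) || (z \in us)].
Let st' := St (inS st) (evn st :|: [set u in us]) (upd (base st) merged (base st x)) (par st)
             (cpv st) (called st) (done st) (todo st)
             ([seq Call i | i <- us] ++ Scan x (A :\ y) :: s).

Lemma hfx : fvs st = x :: map fv s.
Proof. by rewrite /fvs hs. Qed.

Lemma xE : x \in evn st.
Proof. by apply: (iW6b I); rewrite hfx inE eqxx. Qed.

Lemma xE' : B0 \in evn st.
Proof. by case/andP: (iW2 I xE). Qed.

Lemma c1 i : i < size us -> up st (nth y bs i.+1) = nth y bs i.
Proof.
case: hch => _ _ _ _ hi ii; case: (hi i ii) => hm _ hp _ _.
by rewrite /up hm.
Qed.

Lemma szbs : size bs = (size us).+1.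
Proof. by case: hch. Qed.

Lemma nth0bs : nth y bs 0 = B0.
Proof. by case: hch => _ _ h _ _; rewrite nth0. Qed.

Lemma c2i i : i < size bs -> iter i (up st) (nth y bs i) = B0.
Proof.
elim: i => [|i IH] hi; first exact: nth0bs.
rewrite iterSr c1; last by move: hi; rewrite szbs.
by apply: IH; apply: ltnW.
Qed.

Lemma c2 C : C \in bs -> anc st B0 C.
Proof.
move=> hC; exists (index C bs); rewrite -{2}(nth_index y hC).
by apply: c2i; rewrite index_mem.
Qed.

Lemma B0bs : B0 \in bs.
Proof. by rewrite -nth0bs mem_nth // szbs. Qed.

Lemma c7 C : C \in bs -> C != B0 ->
  exists j, [/\ j < size us, C = nth y bs j.+1 & mate C = Some (nth y us j)].
Proof.
move=> hC hne; set i := index C bs.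
have hi : i < size bs by rewrite index_mem.
have hn : nth y bs i = C by apply: nth_index.
case: i hi hn => [|j] hi hn; first by rewrite nth0bs in hn; rewrite hn eqxx in hne.
have jj : j < size us by rewrite -ltnS -szbs.
exists j; rewrite -hn; split => //.
by case: hch => _ _ _ _ /(_ j jj) [hm _ _ _ _].
Qed.

Lemma c3 C : C \in bs -> C != B0 -> up st C \in bs.
Proof.
move=> hC hne; have [j [jj -> _]] := c7 hC hne.
by rewrite c1 // mem_nth // szbs ltnW.
Qed.

Lemma c4 C : C \in bs -> evb st C.
Proof.
move=> hC; case: (eqVneq C B0) => [->|hne]; first exact: (iW2 I xE).
have [j [jj -> _]] := c7 hC hne.
by case: hch => _ _ _ _ /(_ j jj) [_ _ _ hE hb]; rewrite /evb hE hb eqxx.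
Qed.

Lemma c5 u : u \in us -> [/\ u \in inS st, u \notin evn st,
  exists2 C, C \in bs & mate u = Some C & base st (par st u) \in bs].
Proof.
move=> hu; set j := index u us.
have jj : j < size us by rewrite index_mem.
have hn : nth y us j = u by apply: nth_index.
case: hch => _ _ _ _ /(_ j jj) [hm hodd hp _ _].
move: hodd; rewrite hn inE => /andP [uE uS]; split => //.
  exists (nth y bs j.+1); last by apply: mate_sym; rewrite -hn.
  by rewrite mem_nth // szbs.
by rewrite -hn hp mem_nth // szbs ltnW.
Qed.

Lemma c6 u : mate B0 = Some u -> u \notin us.
Proof.
move=> hm; apply/negP => hu.
have [j [jj hn]] : exists j, j < size us /\ nth y us j = u.
  by exists (index u us); rewrite index_mem nth_index.
case: hch => _ _ _ _ /(_ j jj) [hm' _ _ _ _].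
rewrite hn in hm'; have hB := mate_inj hm' hm.
have hper : iter j.+1 (up st) B0 = B0.
  by rewrite -{1}hB c2i // szbs.
have hB0 : evb st B0 := iW2 I xE.
have [k hk] := iAC I hB0.
have per : forall n, iter (n * j.+1) (up st) B0 = B0.
  by elim=> // n IH; rewrite mulSn iterD IH hper.
have : iter (k * j.+1) (up st) B0 = iter (k * j.+1 - k) (up st) (iter k (up st) B0).
  by rewrite -iterD subnK // leq_pmulr.
by rewrite per iter_fixed // => h; rewrite -h hm in hk.
Qed.


Lemma usE u : u \in us -> u \notin evn st.
Proof. by case/c5. Qed.

Lemma b1 z : z \in evn st -> base st' z = bb (base st z).
Proof.
move=> zE; rewrite /= /upd /merged inE zE /=.
have -> : (z \in us) = false by apply/negP => /usE; rewrite zE.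
by rewrite orbF.
Qed.

Lemma b2 u : u \in us -> base st' u = B0.
Proof. by move=> hu; rewrite /= /upd /merged inE hu orbT. Qed.

Lemma bbB0 : bb B0 = B0.
Proof. by rewrite /bb B0bs. Qed.

Lemma up1 C : evb st C -> (C \notin bs) || (C == B0) -> up st' (bb C) = bb (up st C).
Proof.
move=> hC hor.
have hbb : bb C = C by case/orP: hor => [h|/eqP ->]; [rewrite /bb (negbTE h) | exact: bbB0].
rewrite hbb /up; case: (iW3 I hC) => [->|[u -> /andP [uS uE]]]; first by rewrite hbb.
exact: b1 (iW4 I uS uE).
Qed.

Lemma up2 C : C \in bs -> C != B0 -> bb (up st C) = bb C.
Proof. by move=> hC hne; rewrite /bb hC c3. Qed.

Lemma Lmono k C : evb st C -> anc st' (bb (iter k (up st) C)) (bb C).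
Proof.
elim: k C => [|k IH] C hC; first exact: anc_refl.
rewrite iterSr; have := IH _ (up_evb I hC).
case: (boolP ((C \notin bs) || (C == B0))) => hor.
  by rewrite -up1 // => h; apply: anc_up.
by move: hor; rewrite negb_or negbK => /andP [h1 h2]; rewrite up2.
Qed.

Lemma Lmono' A0 C : evb st C -> anc st A0 C -> anc st' (bb A0) (bb C).
Proof. by move=> hC [k <-]; apply: Lmono. Qed.

Lemma Lconv F C : anc st F B0 -> evb st C -> anc st' F (bb C) -> anc st F C.
Proof.
move=> hF hC [k hk]; elim: k C hC hk => [|k IH] C hC hk.
  case: (boolP (C \in bs)) => hb; first by apply: (anc_trans hF); apply: c2.
  by rewrite /= /bb (negbTE hb) in hk; rewrite hk; apply: anc_refl.
case: (boolP (C \in bs)) => hb; first by apply: (anc_trans hF); apply: c2.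
rewrite iterSr up1 ?hb // in hk; apply: anc_up; exact: IH (up_evb I hC) hk.
Qed.

Lemma hevb'_inv B : evb st' B -> evb st B /\ ((B \notin bs) || (B == B0)).
Proof.
move=> /andP [BE /eqP Bb]; move: BE; rewrite /= inE => /orP [BE|].
  rewrite b1 // /bb in Bb; move: Bb; case: ifP => hb Bb.
    subst; split; [exact (iW2 I xE) | by rewrite eqxx orbT].
  split; first by rewrite /evb BE Bb eqxx.
  by rewrite -Bb hb.
rewrite inE => hu; rewrite b2 // in Bb; subst.
by move: (usE hu); rewrite xE' .
Qed.


Lemma hevb' C : evb st C -> (C \notin bs) || (C == B0) -> evb st' C.
Proof.
move=> hC hor; case/andP: (hC) => CE /eqP Cb.
have hbb : bb C = C by case/orP: hor => [h|/eqP ->]; [rewrite /bb (negbTE h) | exact: bbB0].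
apply/andP; split; first by rewrite /= inE CE.
by rewrite b1 // Cb hbb.
Qed.

Lemma fvs' : fvs st' = us ++ x :: map fv s.
Proof. by rewrite /fvs /= map_cat -map_comp map_id. Qed.

Lemma hsc v w : scanned st' v w -> scanned st v w \/ (v = x /\ w = y).
Proof.
move=> [h1 [h2|[B [hB hw]]]]; first by left; split => //; left.
move: hB => /= /List.in_app_iff [/List.in_map_iff [u [hu _]]//|hB].
case: hB => [[hv hB]|hB].
  subst; case: (eqVneq w y) => [->|wy]; first by right.
  left; split => //; right; exists A; rewrite hs; split; first by left.
  by move: hw; rewrite !inE wy.
by left; split => //; right; exists B; rewrite hs; split => //; right.
Qed.

Lemma hIn w B : List.In (Scan w B) (stack st') ->
  (w = x /\ B = A :\ y) \/ List.In (Scan w B) s.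
Proof.
move=> /= /List.in_app_iff [/List.in_map_iff [u [hu _]]//|[[-> <-]|hB]].
  by left.
by right.
Qed.

Lemma inv_blossom : Inv st'.
Proof.
have I' := I.
have xS := iW1 I xE.
have bx : base st' x = B0 by rewrite b1 ?xE // bbB0.
have by' : base st' y = B0.
  have hlast : last x bs \in bs.
    by move: szbs; case: (bs) => //= b l _; exact: mem_last.
  rewrite b1 // /bb; case: hch => _ _ _ h2 _; by rewrite -h2 hlast.
case: I => W1 W2 W3 W4 W5 W6a W6b W7a W7b AC IM IS SC IE IO.
split.
- move=> z; rewrite /= !inE => /orP [/W1 //|hu]; by case/c5: hu.
- move=> z zE0; have zE1 : (z \in evn st) || (z \in us) by move: zE0; rewrite /= !inE.
  change (evb st' (base st' z)); case/orP: zE1 => [zE|hu].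
    rewrite b1 //; have hz := W2 _ zE; apply: hevb'.
      rewrite /bb; case: ifP => _ //; exact (iW2 I' xE).
    rewrite /bb; case: ifP => hb; by rewrite ?eqxx ?orbT ?hb.
  rewrite b2 //; apply: hevb'; first exact (iW2 I' xE).
  by rewrite eqxx orbT.
- move=> B /hevb'_inv [hB hor]; case: (W3 _ hB) => [->|[u hu /andP [uS uE]]]; first by left.
  right; exists u => //; rewrite uS /= !inE negb_or uE /=.
  case/orP: hor => [hnb|/eqP hB0].
    apply/negP => /c5 [_ _ [C hC hm] _]; have := mate_sym hu; rewrite hm => -[hCB].
    by rewrite -hCB hC in hnb.
  by subst; apply: c6.
- move=> u uS; rewrite /= !inE negb_or => /andP [uE uu].
  by rewrite W4 //.
- exact: W5.
- by move=> z /W6a h; rewrite /= inE h.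
- move=> z; rewrite fvs' mem_cat => /orP [hu|].
    by rewrite /= !inE hu orbT.
  by move=> hz; rewrite /= inE W6b // hfx.
- exact: W7a.
- exact: W7b.
- move=> C /hevb'_inv [hC hor].
  have hbb : bb C = C by case/orP: hor => [h|/eqP ->]; [rewrite /bb (negbTE h) | exact: bbB0].
  have [k hk] := AC _ hC; set R := iter k (up st) C in hk.
  have hR : bb R = R.
    rewrite /bb; case: ifP => // hRb; case: (eqVneq R B0) => [//|hne].
    by have [j [_ _ hm]] := c7 hRb hne; rewrite hm in hk.
  have := Lmono k hC; rewrite -/R hR hbb => -[k' hk']; exists k'; by rewrite hk'.
- move=> z z' zE0 hm z'E0; change (base st' z = base st' z').
  have zE1 : (z \in evn st) || (z \in us) by move: zE0; rewrite /= !inE.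
  have z'E1 : (z' \in evn st) || (z' \in us) by move: z'E0; rewrite /= !inE.
  case: (boolP (z \in us)) => hzu.
    have [_ _ [C hC hmC] _] := c5 hzu; rewrite hm in hmC; case: hmC => ->.
    have CE : C \in evn st by case/andP: (c4 hC).
    by rewrite (b2 hzu) (b1 CE) /bb; case/andP: (c4 hC) => _ /eqP ->; rewrite hC.
  have zE : z \in evn st by move: zE1; rewrite (negbTE hzu) orbF.
  case: (boolP (z' \in us)) => hz'u.
    have [_ _ [C hC hmC] _] := c5 hz'u; rewrite (mate_sym hm) in hmC; case: hmC => ->.
    have CE : C \in evn st by case/andP: (c4 hC).
    by rewrite (b2 hz'u) (b1 CE) /bb; case/andP: (c4 hC) => _ /eqP ->; rewrite hC.
  have z'E : z' \in evn st by move: z'E1; rewrite (negbTE hz'u) orbF.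
  by rewrite !b1 // (IM _ _ zE hm z'E).
- move=> v w /hsc [/IS //|[_ ->]] //.
- rewrite fvs' -cat1s catA.
  apply: (sorted_app (B := B0)).
  + move=> f; rewrite mem_cat => /orP [/b2 //|]; rewrite inE => /eqP ->; exact: bx.
  + have SC' : sortedv st (x :: map fv s) by rewrite -hfx.
    move=> g; rewrite -catA cat1s mem_cat => /orP [/b2 ->|hg]; first exact: anc_refl.
    have gE : g \in evn st by apply: W6b; rewrite hfx.
    rewrite b1 //; have := Lmono' (iW2 I' xE) (sorted_head SC' hg).
    by rewrite bbB0.
  + have SC' : sortedv st (x :: map fv s) by rewrite -hfx.
    case: SC' => _ SC''; apply: (sortedv_mono _ SC'') => f g hf hg ha.
    have fE : f \in evn st by apply: W6b; rewrite hfx inE hf orbT.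
    have gE : g \in evn st by apply: W6b; rewrite hfx inE hg orbT.
    rewrite !b1 //; apply: Lmono' => //; exact: W2.
- move=> v w h wE0 hne0.
  have hne : base st' w != base st' v := hne0.
  case: (hsc h) => [h'|[vx wy]]; last by subst; rewrite bx by' eqxx in hne.
  have vE := scanned_even I' h'.
  have wE1 : (w \in evn st) || (w \in us) by move: wE0; rewrite /= !inE.
  case: (boolP (w \in us)) => hwu.
    have [wS wE _ hp] := c5 hwu.
    have ha : anc st B0 (base st v).
      apply: (IO _ _ h' wS wE x); first by rewrite hfx inE eqxx.
      exact: c2.
    split.
      by apply/negP => /W6a wE'; rewrite wE' in wE.
    right; split.
      change (anc st' (base st' w) (base st' v)); rewrite b2 // b1 //.
      by have := Lmono' (W2 _ vE) ha; rewrite bbB0.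
    move=> B /hIn [[wx _]|hB]; first by subst; rewrite xE in wE.
    have hB' : List.In (Scan w B) (stack st) by rewrite hs; right.
    by move: (W6b _ (inmap hB')) => wE'; rewrite wE' in wE.
  have wE : w \in evn st by move: wE1; rewrite (negbTE hwu) orbF.
  have nyx : ~ (v = y /\ w = x).
    by move=> [vy wx]; subst; rewrite bx by' eqxx in hne.
  have hne' : base st w != base st v.
    by apply: contra hne => /eqP h1; rewrite !b1 // h1.
  have [h1 h2] := IE _ _ h' wE hne'; split => //.
  case: h2 => [h2|[h3 h4]].
    by left; rewrite fvs' mem_cat negb_or hwu /= -hfx.
  right; split.
    change (anc st' (base st' w) (base st' v)); rewrite !b1 //.
    exact: Lmono' (W2 _ vE) h3.
  move=> B /hIn [[wx hB]|hB].
    subst w B; have := h4 A; rewrite hs => /(_ (or_introl erefl)) vA.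
    rewrite !inE vA andbT; apply/eqP => vy; by apply: nyx.
  by apply: h4; rewrite hs; right.
- move=> v w h wS wE0 g hg0.
  have [wE hwu] : w \notin evn st /\ w \notin us.
    by move: wE0; rewrite /= !inE negb_or => /andP [].
  case: (hsc h) => [h'|[vx wy]]; last by subst; rewrite yE in wE.
  have vE := scanned_even I' h'.
  have pE := W4 _ wS wE.
  change (anc st' (base st' g) (base st' (par st w)) -> anc st' (base st' g) (base st' v)).
  rewrite (b1 pE) (b1 vE).
  have SC' : sortedv st (x :: map fv s) by rewrite -hfx.
  have caseB0 : anc st' B0 (bb (base st (par st w))) -> anc st' B0 (bb (base st v)).
    move=> ha; have := Lconv (anc_refl _ B0) (W2 _ pE) ha => ha'.
    have := IO _ _ h' wS wE x; rewrite hfx inE eqxx => /(_ isT ha') ha''.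
    by have := Lmono' (W2 _ vE) ha''; rewrite bbB0.
  move: hg0; rewrite fvs' mem_cat => /orP [hgu|hg]; first by rewrite b2.
  have gE : g \in evn st by apply: W6b; rewrite hfx.
  rewrite b1 //; case: (boolP (base st g \in bs)) => hgb.
    by rewrite /bb hgb; exact: caseB0.
  have -> : bb (base st g) = base st g by rewrite /bb (negbTE hgb).
  move=> ha; have hF := sorted_head SC' hg.
  have := Lconv hF (W2 _ pE) ha => ha'.
  have := IO _ _ h' wS wE g; rewrite hfx => /(_ hg ha') ha''.
  have := Lmono' (W2 _ vE) ha''; by rewrite /bb (negbTE hgb).
Qed.

End Blossom.

Lemma inv_step st st' : Inv st -> step e mate st st' -> Inv st'.
Proof.
move=> I hst; case: hst I.
- by move=> st0 f h1 h2 h3 I; apply: inv_root.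
- by move=> st0 f h1 h2 h3 I; apply: inv_skip.
- by move=> st0 u s0 h1 I; apply: inv_call h1.
- by move=> st0 x A s0 h1 h2 I; apply: inv_return h1 h2.
- by move=> st0 x A s0 y P h1 h2 h3 h4 h5 h6 h7 I; apply: inv_augment h1 h2 h3 h4 h5 h6 h7.
- by move=> st0 x A s0 y y' h1 h2 h3 h4 I; apply: inv_grow h1 h2 h3 h4.
- move=> st0 x A s0 y bs us h1 h2 h3 h4 h5 merged I.
  exact: (inv_blossom I h1 h3 h4 h5).
- by move=> st0 x A s0 y h1 h2 h3 h4 I; apply: inv_nothing h1 h2 h3 h4.
Qed.

Lemma inv_reach st : reachable e mate st -> Inv st.
Proof.
elim=> [|st0 st1 _ IH hs]; first exact: inv_init.
exact: inv_step IH hs.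
Qed.

End Proof.

Theorem lemmaA4 (T : finType) (e : rel T) (mate : T -> option T)
  (e_sym : symmetric e) (e_irr : irreflexive e) (hM : is_matching e mate)
  (st : state T) (hst : reachable e mate st) (x y : T) :
  e x y -> x \in evn st -> y \in evn st ->
  x \in done st -> y \in done st ->
  base st x = base st y.
Proof.
move=> exy xE yE xD yD.
have I := inv_reach e_sym e_irr hM hst.
exact: (final I exy xE yE xD yD).
Qed.
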